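(* Let $m,n\ge1$, let $f(X)=\sum_{i=0}^{mn}a_iX^i\in\mathbb{F}_2[X]$ have degree $mn$, let $C_0,\dots,C_{n-1}$ be the matrices associated with $f$ as in the context, and let $T\in M_{mn}(\mathbb{F}_2)$ be the block matrix $$T=\begin{pmatrix}\mathbf 0& I_m&\mathbf 0&\cdots&\mathbf 0\\ \mathbf 0&\mathbf 0&I_m&\cdots&\mathbf 0\\ \vdots&&&\ddots&\vdots\\ \mathbf 0&\mathbf 0&\mathbf 0&\cdots&I_m\\ C_0&C_1&C_2&\cdots&C_{n-1}\end{pmatrix}$$ with $m\times m$ blocks. Then the characteristic polynomial $\det(XI_{mn}-T)$ of $T$ equals $f(X)$. Consequently, if $f$ is primitive over $\mathbb{F}_2$, then $T$ is invertible and its multiplicative order is $2^{mn}-1$.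
   Context: For $x=(x_1,\dots,x_m)^T\in\mathbb{F}_2^m$, the right shift $R\in M_m(\mathbb{F}_2)$ is given by $Rx=(0,x_1,\dots,x_{m-1})^T$. Given $f(X)=\sum_{i=0}^{mn}a_iX^i\in\mathbb{F}_2[X]$ of degree $mn$, define for $0\le i\le n-1$ the column vector $\mathbf v_i=(a_i,a_{n+i},a_{2n+i},\dots,a_{(m-1)n+i})^T\in\mathbb{F}_2^m$. For $1\le i\le n-1$, $C_i\in M_m(\mathbb{F}_2)$ is the matrix whose first $m-1$ columns are zero and whose last column is $\mathbf v_i$; and $C_0=R+\widehat C_0$, where $\widehat C_0$ has first $m-1$ columns zero and last column $\mathbf v_0$. $\mathbf 0$ denotes the $m\times m$ zero matrix. *)

(* Defs.v *)
From HB Require Import structures.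
From mathcomp Require Import all_boot all_order all_algebra.
Set Implicit Arguments. Unset Strict Implicit. Unset Printing Implicit Defensive.
Import GRing.Theory.
Local Open Scope ring_scope.

Definition Rshift (m : nat) : 'M['F_2]_m :=
  \matrix_(r < m, c < m) ((nat_of_ord r == (nat_of_ord c).+1)%N)%:R.

Definition vvec (f : {poly 'F_2}) (m n i : nat) : 'cV['F_2]_m :=
  \col_(r < m) f`_(r * n + i).

Definition Chat (f : {poly 'F_2}) (m n i : nat) : 'M['F_2]_m :=
  \matrix_(r < m, c < m) (if nat_of_ord c == m.-1 then vvec f m n i r ord0 else 0).

Definition Cmat (f : {poly 'F_2}) (m n i : nat) : 'M['F_2]_m :=
  if i == 0%N then Rshift m + Chat f m n i else Chat f m n i.

Lemma sum_const_m (m n : nat) : (\sum_(i < n) m = m * n)%N.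
Proof. by rewrite big_const_ord iter_addn_0 mulnC. Qed.

Definition Tblock (f : {poly 'F_2}) (m n : nat) : 'M['F_2]_(\sum_(i < n) m) :=
  \mxblock_(i < n, j < n)
     (if (i.+1 < n)%N then (if nat_of_ord j == i.+1 then 1%:M else 0)
      else Cmat f m n j).

Definition Tmat (f : {poly 'F_2}) (m n : nat) : 'M['F_2]_(m * n) :=
  castmx (sum_const_m m n, sum_const_m m n) (Tblock f m n).

Definition poly_order_is (f : {poly 'F_2}) (e : nat) : Prop :=
  (0 < e)%N /\ (f %| 'X^e - 1) /\
  (forall e', (0 < e')%N -> f %| 'X^e' - 1 -> (e <= e')%N).

Definition primitive_poly (f : {poly 'F_2}) : Prop :=
  irreducible_poly f /\ f.[0] != 0 /\
  poly_order_is f (2 ^ (size f).-1 - 1)%N.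

(* Main.v *)
Require Import Defs.
From HB Require Import structures.
From mathcomp Require Import all_boot all_order all_algebra.
Set Implicit Arguments. Unset Strict Implicit. Unset Printing Implicit Defensive.
Import GRing.Theory.
Local Open Scope ring_scope.

Lemma F2_11 : (1 + 1 : 'F_2) = 0.
Proof. by apply: val_inj. Qed.

Lemma F2p_addxx (x : {poly 'F_2}) : x + x = 0.
Proof.
have -> : x + x = (1 + 1) * x by rewrite mulrDl mul1r.
by rewrite -polyC1 -polyCD F2_11 mul0r.
Qed.

Lemma F2p_opp (x : {poly 'F_2}) : - x = x.
Proof. by apply/esym/eqP; rewrite -addr_eq0 F2p_addxx. Qed.

Lemma F2_addxx (x : 'F_2) : x + x = 0.
Proof.
have -> : x + x = (1 + 1) * x by rewrite mulrDl mul1r.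
by rewrite F2_11 mul0r.
Qed.

Lemma sum_divmod (R : nmodType) a b (F : nat -> R) :
  \sum_(0 <= k < a * b) F k = \sum_(0 <= i < a) \sum_(0 <= j < b) F (i * b + j)%N.
Proof.
elim: a => [|a IH]; first by rewrite mul0n !big_geq.
rewrite mulSnr big_nat_recr //= -IH (@big_cat_nat _ _ _ (a * b) 0 (a * b + b) _ _ (leq0n _) (leq_addr _ _)) /=.
congr (_ + _); rewrite (big_addn 0 _ (a * b)) addKn.
by apply: eq_bigr => j _; rewrite addnC.
Qed.

Lemma sum_delta (R : nmodType) a i0 (g : nat -> R) : (i0 < a)%N ->
  \sum_(0 <= i < a) (if i == i0 then g i else 0) = g i0.
Proof.
move=> h; rewrite big_mkord (bigD1 (Ordinal h)) //= eqxx big1 ?addr0 //.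
move=> i /negbTE; rewrite -val_eqE /= => -> //.
Qed.

Lemma sig_divmod n m (s : 'I_(\sum_(i < n) m)) : (0 < m)%N ->
  (@tagnat.sig1 n (fun _ => m) s : nat) = (s %/ m)%N /\
  (@tagnat.sig2 n (fun _ => m) s : nat) = (s %% m)%N.
Proof.
move=> m0; have := tagnat.rect s.
rewrite -(big_ord_widen _ (fun _ => m) (ltnW (ltn_ord (tagnat.sig1 s)))) sum_const_m.
move=> ->; have lt2 := ltn_ord (tagnat.sig2 s).
rewrite mulnC divnMDl // modnMDl divn_small // modn_small // addn0; by split.
Qed.

Definition tnat (f : {poly 'F_2}) (m n k l : nat) : 'F_2 :=
  if ((k %/ m).+1 < n)%N then (((l %/ m == (k %/ m).+1) && (k %% m == l %% m))%N)%:R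
  else (((l %/ m == 0) && (k %% m == (l %% m).+1))%N)%:R +
       (if (l %% m == m.-1)%N then f`_((k %% m) * n + l %/ m)%N else 0).

Lemma TmatE f m n (k l : 'I_(m * n)) : (0 < m)%N -> Tmat f m n k l = tnat f m n k l.
Proof.
move=> m0; rewrite /Tmat castmxE /Tblock /mxblock mxE.
set s := cast_ord _ k; set t := cast_ord _ l.
have [s1 s2] := sig_divmod s m0; have [t1 t2] := sig_divmod t m0.
have ks : (s : nat) = k by [].
have lt : (t : nat) = l by [].
rewrite ks in s1 s2; rewrite lt in t1 t2.
rewrite /tnat -s1 -t1 -s2 -t2.
case: ifP => _.
  case: ifP => h; rewrite !mxE.
    by [].
  by [].
rewrite /Cmat; case: ifP => h0; rewrite !mxE ?h0 //=.
by rewrite add0r.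
Qed.

Lemma det_companion (R : comNzRingType) p (y : R) (b : 'I_p.+1 -> R) (G : 'M[R]_p.+1) :
  (forall r c : 'I_p.+1, (r < p)%N ->
      G r c = (c == r :> nat)%:R * y - (c == r.+1 :> nat)%:R) ->
  (forall c, G ord_max c = b c) ->
  \det G = \sum_(c < p.+1) y ^+ c * b c.
Proof.
elim: p y b G => [|p IH] y b G HG Hb.
  rewrite [G]mx11_scalar det_scalar1 big_ord1 expr0 mul1r.
  by rewrite -Hb; congr (G _ _); apply: val_inj.
rewrite (expand_det_col _ ord0) (bigD1 ord0) // (bigD1 ord_max) //=.
rewrite big1 ?addr0; last first.
  move=> i /andP [i0 imax].
  have i0' : (i : nat) != 0%N by move: i0; rewrite -val_eqE.
  have ilt : (i < p.+1)%N.
    move: (ltn_ord i) imax; rewrite ltnS leq_eqVlt -val_eqE /= => /orP [->|] //.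
  by rewrite HG //= (eq_sym 0%N) (negbTE i0') mul0r sub0r oppr0 mul0r.
rewrite HG //= mul1r subr0 Hb /cofactor !addn0 expr0 mul1r.
rewrite (IH y (fun c => b (lift ord0 c))); first last.
- move=> c; rewrite !mxE; rewrite -Hb; congr (G _ _); apply: val_inj => //=.
- move=> r c rp; rewrite !mxE HG; last by rewrite lift0 ltnS.
  by rewrite !lift0.
rewrite (det_trig (A := row' ord_max (col' ord0 G))); last first.
  apply/is_trig_mxP => i j ij; rewrite !mxE HG; last by rewrite lift_max.
  rewrite lift_max !lift0 /=.
  have -> : (j.+1 == i) = false by apply/negbTE; rewrite neq_ltn ltnS (ltnW ij) orbT.
  rewrite eqSS; have -> : (j == i :> nat) = false.
    by apply/negbTE; rewrite neq_ltn ij orbT.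
  by rewrite mul0r subr0.
rewrite [\prod_(i < _) _](eq_bigr (fun _ => -1)); last first.
  move=> i _; rewrite !mxE HG; last by rewrite lift_max.
  rewrite lift_max !lift0 /= eqxx.
  have -> : (i.+1 == i) = false by apply/negbTE; rewrite neq_ltn ltnSn orbT.
  by rewrite mul0r sub0r.
rewrite prodr_const card_ord -exprMn mulrNN mulr1 expr1n mulr1.
rewrite [RHS]big_ord_recl expr0 mul1r addrC; congr (_ + _).
rewrite big_distrr; apply: eq_bigr => i _ /=; by rewrite exprS mulrA.
Qed.

Lemma divmod_im m i c : (c < m)%N -> ((i * m + c) %/ m = i)%N /\ ((i * m + c) %% m = c)%N.
Proof.
move=> cm; have m0 : (0 < m)%N by apply: leq_ltn_trans cm.
by rewrite divnMDl // modnMDl divn_small // modn_small // addn0.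
Qed.

Lemma eq_divmod m k i c : (c < m)%N ->
  (k == i * m + c)%N = (i == k %/ m)%N && (c == k %% m)%N.
Proof.
move=> cm; have [d1 d2] := divmod_im i cm.
apply/eqP/andP => [->|[/eqP -> /eqP ->]]; first by rewrite d1 d2.
by rewrite -divn_eq.
Qed.

Lemma lt_p m n k : (0 < m)%N -> (0 < n)%N -> (k < n.-1 * m)%N = ((k %/ m).+1 < n)%N.
Proof. by move=> m0; case: n => // n' _; rewrite -ltn_divLR. Qed.

Lemma div_last m n k : (0 < m)%N -> (n.-1 * m <= k)%N -> (k < m * n)%N -> (k %/ m)%N = n.-1.
Proof.
move=> m0 h1 h2; apply/eqP; rewrite eqn_leq leq_divRL // h1 andbT.
case: n h1 h2 => [|n'] /=; first by rewrite muln0.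
by move=> _ h2; rewrite -ltnS ltn_divLR // mulnC.
Qed.

Lemma sum_ind (R : pzSemiRingType) a i0 (b : bool) (g : nat -> R) : (i0 < a)%N ->
  \sum_(0 <= i < a) ((i == i0)%N && b)%:R * g i = if b then g i0 else 0.
Proof.
move=> h; case: b.
  rewrite -(sum_delta g h); apply: eq_bigr => i _; rewrite andbT.
  by case: (i == i0)%N; rewrite ?mul1r ?mul0r.
by rewrite big1 // => i _; rewrite andbF mul0r.
Qed.

Lemma sum_indn (R : nmodType) a i0 (b : bool) (g : nat -> R) : (i0 < a)%N ->
  \sum_(0 <= i < a) g i *+ ((i == i0)%N && b) = if b then g i0 else 0.
Proof.
move=> h; case: b.
  rewrite -(sum_delta g h); apply: eq_bigr => i _; rewrite andbT.
  by case: (i == i0)%N.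
by rewrite big1 // => i _; rewrite andbF.
Qed.

Lemma det_companion' (R : comNzRingType) q (y : R) (b : nat -> R) (G : 'M[R]_q) :
  (0 < q)%N ->
  (forall r c : 'I_q, (r < q.-1)%N ->
      G r c = (c == r :> nat)%:R * y - (c == r.+1 :> nat)%:R) ->
  (forall r c : 'I_q, (r : nat) = q.-1 -> G r c = b c) ->
  \det G = \sum_(c < q) y ^+ c * b c.
Proof.
case: q G => // q G _ HG Hb; apply: det_companion => //.
by move=> c; apply: Hb.
Qed.

Lemma det_castmx (R : comNzRingType) a a' (e : a = a') (M : 'M[R]_a) :
  \det (castmx (e, e) M) = \det M.
Proof. by case: a' / e; rewrite castmx_id. Qed.

Lemma F2_nz1 (x : 'F_2) : x != 0 -> x = 1.
Proof. by case: x => [[|[|//]]] Hx //= _; apply: val_inj. Qed.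

Section Main.
Variables (f : {poly 'F_2}) (m n : nat).
Hypotheses (m0 : (0 < m)%N) (n0 : (0 < n)%N).

Local Notation N := (m * n)%N.
Local Notation p := (n.-1 * m)%N.

Definition aa (k l : nat) : {poly 'F_2} := 'X *+ (k == l)%N + (tnat f m n k l)%:P.
Definition ee (k l : nat) : {poly 'F_2} :=
  if (p <= l)%N then (if (k %% m == l %% m)%N then 'X^(k %/ m) else 0) else (k == l)%N%:R.
Definition ww (r : nat) : {poly 'F_2} := \sum_(0 <= i < n) (f`_(r * n + i))%:P * 'X^i.
Definition qq (i j : nat) : {poly 'F_2} :=
  'X^n *+ (i == j)%N + (i == j.+1)%N%:R + (if (j == m.-1)%N then ww i else 0).
Definition bb (k l : nat) : {poly 'F_2} :=
  if (p <= l)%N then (if (p <= k)%N then qq (k %% m) (l %% m) else 0) else aa k l.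

Lemma Aa (k l : 'I_N) : char_poly_mx (Tmat f m n) k l = aa k l.
Proof. by rewrite !mxE TmatE // F2p_opp. Qed.

Lemma Bent (k l : 'I_N) :
  (char_poly_mx (Tmat f m n) *m \matrix_(k0, l0) ee k0 l0) k l = bb k l.
Proof.
rewrite mxE (eq_bigr (fun j : 'I_N => aa k j * ee j l)); last first.
  by move=> j _; rewrite Aa mxE.
rewrite -(big_mkord xpredT (fun j => aa k j * ee j l)).
rewrite /bb /ee; case: (leqP p l) => hl; last first.
  rewrite -(sum_delta (fun j => aa k j) (ltn_ord l)).
  by apply: eq_bigr => j _; case: (j == l)%N; rewrite ?mulr1 ?mulr0.
have -> : forall F : nat -> {poly 'F_2}, \sum_(0 <= i < m * n) F i =
    \sum_(0 <= i < n) \sum_(0 <= j < m) F (i * m + j)%N.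
  by move=> F; rewrite mulnC sum_divmod.
set c := (l %% m)%N; have cm : (c < m)%N by apply: ltn_pmod.
rewrite (eq_big_nat _ _ (F2 := fun i => aa k (i * m + c) * 'X^i)); last first.
  move=> i _.
  rewrite (eq_big_nat _ _ (F2 := fun c' => if c' == c then aa k (i * m + c) * 'X^i else 0)).
    by rewrite sum_delta.
  move=> c' /andP [_ hc']; have [d1 d2] := divmod_im i hc'; rewrite d1 d2.
  by case: eqP => [->|]; rewrite ?mulr0.
rewrite /aa /tnat.
under eq_bigr => i _ do rewrite (proj1 (divmod_im i cm)) (proj2 (divmod_im i cm)) (eq_divmod _ _ cm).
have kN := ltn_ord k; have kq := ltn_pmod k m0.
have kdn : (k %/ m < n)%N by rewrite ltn_divLR // (mulnC n m).
case: (leqP p k) => hk.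
  rewrite -(lt_p k m0 n0) ltnNge hk /= (div_last m0 hk kN).
  under eq_bigr => i _ do rewrite polyCD polyC_natr !mulrDl mulrnAl mulr_natl.
  have hn1 : (n.-1 < n)%N by rewrite ltn_predL.
  rewrite !big_split /= !sum_indn // /qq /ww.
  rewrite -exprS prednK // expr0 (eq_sym c).
  case: (c == m.-1); last first.
    rewrite big1 ?addr0; last by move=> i _; rewrite mul0r.
    by case: (k %% m == c)%N; case: (k %% m == c.+1)%N; rewrite ?mulr1n ?mulr0n.
  rewrite addrA; congr (_ + _).
  by case: (k %% m == c)%N; case: (k %% m == c.+1)%N; rewrite ?mulr1n ?mulr0n.
rewrite -(lt_p k m0 n0) hk.
under eq_bigr => i _ do rewrite polyC_natr !mulrDl mulrnAl mulr_natl.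
have hk1 : ((k %/ m).+1 < n)%N by rewrite -(lt_p k m0 n0).
rewrite !big_split /= !sum_indn // -exprS (eq_sym c).
by case: (k %% m == c)%N; rewrite ?F2p_addxx ?addr0.
Qed.

Lemma eqN : (m * n = n.-1 * m + m)%N.
Proof. by rewrite -mulSnr prednK // mulnC. Qed.

Lemma detE : \det (\matrix_(k0, l0) ee k0 l0 : 'M_N) = 'X^p.
Proof.
rewrite -det_tr det_trig; last first.
  apply/is_trig_mxP => i j ij; rewrite !mxE /ee.
  case: (leqP p i) => hi; last by have := ltn_eqF ij; rewrite eq_sym => ->.
  have hj : (p <= j)%N by apply: leq_trans hi (ltnW ij).
  rewrite (div_last m0 hj (ltn_ord j)) -(div_last m0 hi (ltn_ord i)).
  case: eqP => // hm; exfalso; move: ij.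
  by rewrite (divn_eq j m) (divn_eq i m) hm (div_last m0 hj (ltn_ord j)) -(div_last m0 hi (ltn_ord i)) ltnn.
rewrite (eq_bigr (fun i : 'I_N => ee i i)); last by move=> i _; rewrite !mxE.
rewrite -(big_mkord xpredT (fun i => ee i i)).
have pN : (p <= N)%N by rewrite mulnC leq_mul2l ?leq_pred ?orbT.
rewrite (@big_cat_nat _ _ _ p 0 N _ _ (leq0n p) pN) /= big1_seq ?mul1r; last first.
  by move=> i; rewrite mem_index_iota /ee => /andP [_ /ltn_geF ->]; rewrite eqxx.
rewrite (eq_big_nat _ _ (F2 := fun _ => 'X^(n.-1))); last first.
  by move=> i /andP [h1 h2]; rewrite /ee h1 eqxx (div_last m0 h1 h2).
rewrite prodr_const_nat -exprM; congr ('X^_).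
by rewrite eqN addKn mulnC.
Qed.

Lemma detB :
  \det (char_poly_mx (Tmat f m n) *m \matrix_(k0, l0) ee k0 l0) =
  'X^p * \det (\matrix_(i < m, j < m) qq i j).
Proof.
set B := _ *m _.
rewrite -(det_castmx eqN B) -[castmx _ B]submxK.
have -> : ursubmx (castmx (eqN, eqN) B) = 0.
  apply/matrixP => i j; rewrite !mxE castmxE Bent /bb /=.
  by rewrite leq_addr leqNgt ltn_ord.
rewrite det_lblock; congr (_ * _).
  rewrite -det_tr det_trig; last first.
    apply/is_trig_mxP => i j ij; rewrite !mxE castmxE Bent /bb /= leqNgt ltn_ord /=.
    have jp := ltn_ord j.
    have hd : (i %/ m < (j %/ m).+1)%N by rewrite ltnS leq_div2r // ltnW.
    rewrite /aa /tnat -(lt_p j m0 n0) jp (gtn_eqF ij) (ltn_eqF hd) /=.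
    by rewrite mulr0n add0r.
  rewrite (eq_bigr (fun _ => 'X)); first by rewrite prodr_const card_ord.
  move=> i _; rewrite !mxE castmxE Bent /bb /= leqNgt ltn_ord /=.
  have ip := ltn_ord i.
  rewrite /aa /tnat -(lt_p i m0 n0) ip eqxx (ltn_eqF (ltnSn _)) /=.
  by rewrite addr0.
congr (\det _); apply/matrixP => i j; rewrite !mxE castmxE Bent /bb /= !leq_addr.
by rewrite !modnMDl !modn_small.
Qed.

Lemma detQ :
  \det (\matrix_(i < m, j < m) qq i j) =
  \sum_(0 <= k < m * n) (f`_k)%:P * 'X^k + 'X^(m * n).
Proof.
rewrite -det_tr (det_companion' (y := 'X^n) (b := fun c => 'X^n *+ (c == m.-1)%N + ww c)) //.
- rewrite (eq_bigr _ (fun c _ => mulrDr _ _ _)) big_split /= addrC; congr (_ + _).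
    rewrite sum_divmod big_mkord; apply: eq_bigr => i _.
    rewrite /ww big_distrr /=; apply: eq_bigr => j _.
    by rewrite mulrCA -exprM -exprD mulnC.
  have hm1 : (m.-1 < m)%N by rewrite ltn_predL.
  rewrite (bigD1 (Ordinal hm1)) //= big1 ?addr0; last first.
    by move=> i /negbTE; rewrite -val_eqE /= => ->; rewrite mulr0n mulr0.
  rewrite eqxx mulr1n -exprM -exprD; congr ('X^_).
  by rewrite -mulnSr prednK // mulnC.
- move=> r c hr; rewrite !mxE /qq (ltn_eqF hr) addr0 F2p_opp mulr_natl.
  by rewrite (eq_sym (c : nat)).
- move=> r c hr; rewrite !mxE /qq hr eqxx.
  have hc := ltn_ord c; rewrite (_ : (c == m.-1.+1 :> nat) = false) ?addr0 //.
  by rewrite prednK // ltn_eqF.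
Qed.

Lemma fexp : size f = (m * n).+1 ->
  f = \sum_(0 <= k < m * n) (f`_k)%:P * 'X^k + 'X^(m * n).
Proof.
move=> hs; rewrite -{1}[f]coefK poly_def hs big_ord_recr /= big_mkord.
congr (_ + _); first by apply: eq_bigr => k _; rewrite mul_polyC.
have : lead_coef f != 0 by rewrite lead_coef_eq0 -size_poly_eq0 hs.
by rewrite /lead_coef hs /= => /F2_nz1 ->; rewrite scale1r.
Qed.

Lemma charT : size f = (m * n).+1 -> char_poly (Tmat f m n) = f.
Proof.
move=> hs; have h := detB; rewrite det_mulmx detE in h.
have Xp : 'X^p != 0 :> {poly 'F_2} by rewrite monic_neq0 ?monicXn.
apply: (mulIf Xp); rewrite /char_poly h mulrC detQ -fexp //.
Qed.

End Main.

Lemma order_mx N (A : 'M['F_2]_N) (f : {poly 'F_2}) : (0 < N)%N ->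
  char_poly A = f -> irreducible_poly f ->
  forall k, (A ^+ k == 1) = (f %| 'X^k - 1).
Proof.
case: N A => // N' A _ hc [_ hirr] k.
have hmin : mxminpoly A %= f.
  apply: hirr; last by rewrite -hc mxminpoly_dvd_char.
  by rewrite size_mxminpoly eqSS -lt0n mxminpoly_nonconstant.
rewrite -(eqp_dvdl _ hmin) -subr_eq0.
have -> : A ^+ k - 1 = horner_mx A ('X^k - 1).
  by rewrite rmorphB rmorphXn /= horner_mx_X rmorph1.
by apply/eqP/mxminpoly_minP.
Qed.

Unset Implicit Arguments.
Set Strict Implicit.
Set Printing Implicit Defensive.

Theorem mainTheorem2 (m n : nat) (f : {poly 'F_2}) :
  (1 <= m)%N -> (1 <= n)%N -> size f = (m * n).+1 ->
  char_poly (Tmat f m n) = f /\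
  (primitive_poly f ->
     Tmat f m n \in unitmx /\
     Tmat f m n ^+ (2 ^ (m * n) - 1) = 1 /\
     (forall k, (0 < k)%N -> (k < 2 ^ (m * n) - 1)%N -> Tmat f m n ^+ k != 1)).
Proof.
move=> hm hn hs; have hc := charT hm hn hs; split => //.
case=> hirr [_ [e0 [hdiv hmin]]]; rewrite hs /= in e0 hdiv hmin.
have N0 : (0 < m * n)%N by rewrite muln_gt0 hm hn.
have key := order_mx N0 hc hirr.
have h1 : Tmat f m n ^+ (2 ^ (m * n) - 1) = 1 by apply/eqP; rewrite key.
split; last split => //.
  have [] := @mulmx1_unit _ _ (Tmat f m n) (Tmat f m n ^+ (2 ^ (m * n) - 1).-1) => //.
  by rewrite mulmxE -exprS prednK.
move=> k k0 klt; rewrite key; apply/negP => /(hmin k k0).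
by rewrite leqNgt klt.
Qed.
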